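(* Let $G$ be a graph of goods, $n\ge1$, $t\ge 1$ integers, and $c>0$ a real number. Suppose that for every regular collection of $n$ agents (respectively, for every regular collection of $n$ agents of at most $t$ types) with utility functions on $G$ there exists a $c$-sufficient allocation. Then for every collection of $n$ agents with arbitrary utility functions on $G$ (respectively, every collection of $n$ agents of at most $t$ types) there exists a $c$-sufficient allocation.
   Context: A graph of goods is a finite connected graph $G=(V,E)$ whose vertices are goods. A utility function on $G$ assigns a non-negative real number to each good and is extended additively to sets. A $G$-bundle is a subset of $V$ inducing a connected subgraph of $G$ (the empty set allowed). An $n$-split of $G$ is a sequence of $n$ pairwise disjoint $G$-bundles (possibly empty) whose union is $V$. $\mathrm{mms}^{(n)}(G,u)=\max_{P_1,\dots,P_n}\min_i u(P_i)$ over all $n$-splits. An allocation to agents $1,\dots,n$ with utilities $u_1,\dots,u_n$ is an $n$-split $P_1,\dots,P_n$ with $P_i$ given to agent $i$. For $c>0$, the allocation is $c$-sufficient if $u_i(P_i)\ge c\cdot\mathrm{mms}^{(n)}(G,u_i)$ for all $i$. Agents are of the same type if they have the same utility function. An agent with utility $u$ is $n$-proportional if $\mathrm{mms}^{(n)}(G,u)=u(V)/n$, and $n$-regular if moreover $\mathrm{mms}^{(n)}(G,u)=1$. A collection of $n$ agents is regular if every agent in it is $n$-regular. *)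

(* Defs.v *)
From HB Require Import structures.
From mathcomp Require Import all_boot all_order all_algebra.
Set Implicit Arguments. Unset Strict Implicit. Unset Printing Implicit Defensive.
Import Order.TTheory GRing.Theory Num.Theory.
Local Open Scope ring_scope.

Definition graph_of_goods (T : finType) (e : rel T) : Prop :=
  symmetric e /\ irreflexive e /\ (forall x y : T, connect e x y).

Definition induced (T : finType) (e : rel T) (S : {set T}) : rel T :=
  [rel x y | [&& x \in S, y \in S & e x y]].

(* G-bundle: S induces a connected subgraph (empty set allowed). *)
Definition bundle (T : finType) (e : rel T) (S : {set T}) : bool :=
  [forall x in S, forall y in S, connect (induced e S) x y].

Definition is_split (T : finType) (e : rel T) (n : nat)
    (P : {ffun 'I_n -> {set T}}) : bool :=
  [&& [forall i, bundle e (P i)],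
      [forall i, forall j, (i != j) ==> [disjoint P i & P j]] &
      (\bigcup_(i < n) P i == [set: T])].

Definition util (R : realFieldType) (T : finType) (u : T -> R) (S : {set T}) : R :=
  \sum_(x in S) u x.

Definition utility (R : realFieldType) (T : finType) (u : T -> R) : Prop :=
  forall x, 0 <= u x.

(* min_i u(P_i); for n >= 1 the default u(V) is harmless since u(P_i) <= u(V)
   for nonnegative u. *)
Definition min_share (R : realFieldType) (T : finType) (n : nat) (u : T -> R)
    (P : {ffun 'I_n -> {set T}}) : R :=
  \big[Num.min/util u [set: T]]_(i < n) util u (P i).

(* mms^{(n)}(G,u) = max over n-splits of min_i u(P_i); the default 0 is harmless
   for nonnegative u since n-splits exist. *)
Definition mms (R : realFieldType) (T : finType) (e : rel T) (n : nat) (u : T -> R) : R :=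
  \big[Num.max/0]_(P : {ffun 'I_n -> {set T}} | is_split e P) min_share u P.

Definition c_sufficient (R : realFieldType) (T : finType) (e : rel T) (n : nat)
    (c : R) (U : 'I_n -> T -> R) (P : {ffun 'I_n -> {set T}}) : Prop :=
  is_split e P /\ forall i, c * mms e n (U i) <= util (U i) (P i).

Definition n_proportional (R : realFieldType) (T : finType) (e : rel T) (n : nat)
    (u : T -> R) : Prop :=
  mms e n u = util u [set: T] / n%:R.

Definition n_regular (R : realFieldType) (T : finType) (e : rel T) (n : nat)
    (u : T -> R) : Prop :=
  n_proportional e n u /\ mms e n u = 1.

Definition regular_collection (R : realFieldType) (T : finType) (e : rel T) (n : nat)
    (U : 'I_n -> T -> R) : Prop :=
  forall i, n_regular e n (U i).

Definition at_most_types (R : realFieldType) (T : finType) (n t : nat)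
    (U : 'I_n -> T -> R) : Prop :=
  exists (w : 'I_t -> T -> R) (f : 'I_n -> 'I_t), forall i x, U i x = w (f i) x.

(* Main.v *)
Require Import Defs.
From HB Require Import structures.
From mathcomp Require Import all_boot all_order all_algebra.
From mathcomp Require Import lra.
From Stdlib Require Import FunctionalExtensionality.
Import Order.TTheory GRing.Theory Num.Theory.
Local Open Scope ring_scope.

Section H.
Variables (R : realFieldType) (T : finType) (e : rel T) (n : nat).
Implicit Types (u : T -> R) (P : {ffun 'I_n -> {set T}}).

Lemma util_ge0 u S : (forall x, 0 <= u x) -> 0 <= util u S.
Proof. by move=> h; apply: sumr_ge0 => x _. Qed.

Lemma min_share_le u P i : min_share u P <= util u (P i).
Proof. by rewrite /min_share (bigD1 i) //= ge_min lexx. Qed.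

Lemma min_share_ge u P a : (forall i, a <= util u (P i)) -> a <= util u [set: T] ->
  a <= min_share u P.
Proof.
move=> h hT; rewrite /min_share; elim/big_ind: _ => //.
by move=> x y hx hy; rewrite le_min hx hy.
Qed.

Lemma le_mms u P : is_split e P -> min_share u P <= mms e n u.
Proof. by move=> hP; rewrite /mms (bigD1 P) //= le_max lexx. Qed.

Lemma mms_attained u : 0 < mms e n u ->
  exists P, is_split e P /\ min_share u P = mms e n u.
Proof.
have : mms e n u = 0 \/ exists P, is_split e P /\ min_share u P = mms e n u.
  rewrite /mms.
  apply: (big_ind (fun m => m = 0 \/ exists P, is_split e P /\ min_share u P = m)).
  - by left.
  - move=> x y hx hy; case: leP => _; [case: hy => [->|[P [h1 <-]]] | case: hx => [->|[P [h1 <-]]]];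
      by [left | right; exists P].
  - by move=> P hP; right; exists P.
case=> [->|//]; by rewrite ltxx.
Qed.

Lemma split_sum u P : is_split e P -> util u [set: T] = \sum_i util u (P i).
Proof.
case/and3P=> _ /forallP hd /eqP hc.
rewrite /util -hc partition_disjoint_bigcup // => i j hij.
by move: (hd i) => /forallP /(_ j) /implyP; apply.
Qed.

Lemma split_disj P i j x : is_split e P -> x \in P i -> x \in P j -> i = j.
Proof.
case/and3P=> _ /forallP hd _ hi hj; apply/eqP; apply: contraT => hij.
move: (hd i) => /forallP /(_ j) /implyP /(_ hij) /disjointFr /(_ hi).
by rewrite hj.
Qed.


Definition opt u := [pick P : {ffun 'I_n -> {set T}} | is_split e P && (min_share u P == mms e n u)].
Definition tr u x := if opt u is Some P then
  (if [pick i | x \in P i] is Some i then u x / util u (P i) else 0) else 0.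

Lemma mms_le1 u : (0 < n)%N -> util u [set: T] = n%:R -> mms e n u <= 1.
Proof.
move=> n0 hT; rewrite /mms.
apply: (big_ind (fun m => m <= 1)) => //.
  by move=> x y hx hy; rewrite ge_max hx hy.
move=> P hP.
have h1 : min_share u P * n%:R <= n%:R.
  have -> : min_share u P * n%:R = \sum_(i < n) min_share u P.
    by rewrite sumr_const card_ord mulr_natr.
  rewrite -[X in _ <= X]hT (split_sum u P hP).
  by apply: ler_sum => i _; apply: min_share_le.
have hn : (1 : R) <= n%:R by rewrite ler1n.
nra.
Qed.

Lemma tr_props u : (0 < n)%N -> (forall x, 0 <= u x) -> 0 < mms e n u ->
  (forall x, 0 <= tr u x) /\ n_regular e n (tr u) /\
  (forall S, util (tr u) S <= util u S / mms e n u).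
Proof.
move=> n0 u0 m0.
have [P [hP hm]] := mms_attained u m0.
rewrite /tr /opt; case: pickP => [Q' /andP [hQ /eqP hQm]|]; last first.
  by move=> /(_ P); rewrite hP hm eqxx.
set m := mms e n u in m0 hm hQm *.
have hpos i : m <= util u (Q' i) by rewrite -hQm min_share_le.
have blk i x : x \in Q' i -> [pick j | x \in Q' j] = Some i.
  move=> hx; case: pickP => [j hj|/(_ i)]; last by rewrite hx.
  by rewrite (split_disj Q' j i x hQ hj hx).
have tr0 x : 0 <= (if [pick i | x \in Q' i] is Some i then u x / util u (Q' i) else 0).
  case: pickP => // i _; apply: divr_ge0 => //; exact: util_ge0.
have trP i : util (fun x => if [pick i | x \in Q' i] is Some i then u x / util u (Q' i) else 0) (Q' i) = 1.
  rewrite /util (eq_bigr (fun x => u x / util u (Q' i))); last by move=> x hx; rewrite (blk i x hx).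
  rewrite -mulr_suml divff // gt_eqF //; exact: lt_le_trans m0 (hpos i).
pose v := (fun x => if [pick i | x \in Q' i] is Some i then u x / util u (Q' i) else 0).
rewrite -/v in tr0 trP *.
have vT : util v [set: T] = n%:R.
  by rewrite (split_sum v Q' hQ) (eq_bigr (fun _ => 1)) // sumr_const card_ord.
have mv : mms e n v = 1.
  apply/eqP; rewrite eq_le mms_le1 //=.
  apply: le_trans (le_mms v Q' hQ); apply: min_share_ge => [i|]; first by rewrite trP.
  by rewrite vT ler1n.
split => //; split.
  by split => //; rewrite /n_proportional mv vT divff // pnatr_eq0 -lt0n.
move=> S; rewrite /util mulr_suml; apply: ler_sum => x _.
rewrite /v; case: pickP => [i _|_]; last by apply: divr_ge0 => //; exact: ltW.
apply: ler_wpM2l => //; rewrite lef_pV2 ?posrE //; exact: lt_le_trans m0 (hpos i).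
Qed.

End H.
Arguments tr {R T} e n u x.
Arguments tr_props {R T e n} u _ _ _.
Arguments util_ge0 {R T} u S _.
Section M.
Variables (R : realFieldType) (T : finType) (e : rel T) (n : nat).

Lemma trivial_split : graph_of_goods e -> (0 < n)%N ->
  exists P : {ffun 'I_n -> {set T}}, is_split e P.
Proof.
move=> [_ [_ hc]] n0.
exists [ffun i : 'I_n => if val i == 0%N then [set: T] else set0].
apply/and3P; split.
- apply/forallP => i; rewrite ffunE; case: ifP => _; apply/forallP => x;
    apply/implyP => hx; apply/forallP => y; apply/implyP => hy; last by rewrite inE in hx.
  rewrite (@eq_connect _ _ e) // => a b; by rewrite /induced /= !inE.
- apply/forallP => i; apply/forallP => j; apply/implyP => hij; rewrite !ffunE.
  case: ifP => hi; case: ifP => hj; try by rewrite disjoints_subset sub0set.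
  2: by rewrite disjoint_sym disjoints_subset sub0set.
  by move: hij; rewrite -val_eqE /= (eqP hi) (eqP hj).
- apply/eqP/setP => x; rewrite inE; apply/bigcupP; exists (Ordinal n0) => //.
  by rewrite ffunE eqxx inE.
Qed.

Definition V (U : 'I_n -> T -> R) (i0 i : 'I_n) :=
  if 0 < mms e n (U i) then tr e n (U i) else tr e n (U i0).

Lemma V_props (U : 'I_n -> T -> R) (i0 : 'I_n) : (0 < n)%N -> (forall i x, 0 <= U i x) ->
  0 < mms e n (U i0) ->
  (forall i x, 0 <= V U i0 i x) /\ regular_collection e (V U i0) /\
  forall c P, 0 < c -> c_sufficient e c (V U i0) P -> c_sufficient e c U P.
Proof.
move=> n0 U0 m0.
have hV i : 0 < mms e n (U i) -> V U i0 i = tr e n (U i) by rewrite /V => ->.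
have hV' i : ~~ (0 < mms e n (U i)) -> V U i0 i = tr e n (U i0) by rewrite /V => /negbTE ->.
have P0 := tr_props (U i0) n0 (U0 i0) m0.
split; [|split].
- move=> i x; case: (boolP (0 < mms e n (U i))) => h.
    by rewrite hV //; case: (tr_props (U i) n0 (U0 i) h).
  by rewrite hV' //; case: P0.
- move=> i; case: (boolP (0 < mms e n (U i))) => h.
    by rewrite hV //; case: (tr_props (U i) n0 (U0 i) h) => _ [].
  by rewrite hV' //; case: P0 => _ [].
- move=> c P c0 [hP hc]; split => // i.
  case: (boolP (0 < mms e n (U i))) => h; last first.
    rewrite -leNgt in h.
    by apply: le_trans (util_ge0 _ _ (U0 i)); rewrite pmulr_rle0.
  move: (hc i); rewrite hV //.
  case: (tr_props (U i) n0 (U0 i) h) => _ [[_ ->] hle] hci.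
  rewrite mulr1 in hci.
  rewrite -ler_pdivlMr //; exact: le_trans hci (hle _).
Qed.

End M.

Theorem proposition2p3 (R : realFieldType) (T : finType) (e : rel T)
    (n t : nat) (c : R) :
  graph_of_goods e -> (1 <= n)%N -> (1 <= t)%N -> 0 < c ->
  ((forall U : 'I_n -> T -> R, (forall i, utility (U i)) ->
      regular_collection e U -> exists P, c_sufficient e c U P) ->
   forall U : 'I_n -> T -> R, (forall i, utility (U i)) ->
      exists P, c_sufficient e c U P)
  /\
  ((forall U : 'I_n -> T -> R, (forall i, utility (U i)) ->
      regular_collection e U -> at_most_types t U ->
      exists P, c_sufficient e c U P) ->
   forall U : 'I_n -> T -> R, (forall i, utility (U i)) ->
      at_most_types t U -> exists P, c_sufficient e c U P).
Proof.
move=> G n0 _ c0.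
have triv (U : 'I_n -> T -> R) : (forall i, utility (U i)) ->
    (forall i, ~~ (0 < mms e n (U i))) -> exists P, c_sufficient e c U P.
  move=> U0 h; have [P hP] := @trivial_split T e n G n0; exists P; split => // i.
  have := h i; rewrite -leNgt => hi.
  by apply: le_trans (util_ge0 _ _ (U0 i)); rewrite pmulr_rle0.
split => [H U U0 | H U U0 [w [f hw]]].
- case: (pickP (fun i => 0 < mms e n (U i))) => [i0 hi0|hno]; last first.
    by apply: triv => // i; rewrite hno.
  have [A [B C]] := @V_props R T e n U i0 n0 U0 hi0.
  have [P hP] := H _ A B; exists P; exact: C.
- case: (pickP (fun i => 0 < mms e n (U i))) => [i0 hi0|hno]; last first.
    by apply: triv => // i; rewrite hno.
  have [A [B C]] := @V_props R T e n U i0 n0 U0 hi0.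
  have hU : U = fun i => w (f i).
    by apply: functional_extensionality => i; apply: functional_extensionality => x.
  have hT : at_most_types t (V R T e n U i0).
    exists (fun k => if 0 < mms e n (w k) then tr e n (w k) else tr e n (U i0)), f.
    by move=> i x; rewrite /V hU.
  have [P hP] := H _ A B hT; by exists P; exact: C.
Qed.
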